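(* Let $G$ be any group and $E$ a real Banach space. Then: (1) $KAM(G;E)\subseteq KJ(G;E)$, $PAM(G;E)\subseteq PJ(G;E)$, and $\mathrm{Hom}(G;E)\subseteq J_0(G;E)$. (2) If $f\in PJ(G;E)$ and $f(xy)=f(yx)$ for all $x,y\in G$, then $f\in PAM(G;E)$.
   Context: $KJ(G;E)$: functions $f\colon G\to E$ such that for some $c>0$, $\|f(xy)+f(xy^{-1})-2f(x)\|\le c$ for all $x,y\in G$. $PJ(G;E)$: those $f\in KJ(G;E)$ with $f(x^n)=nf(x)$ for all $x\in G,n\in\mathbb{Z}$. $J_0(G;E)$: functions $f\colon G\to E$ with $f(xy)+f(xy^{-1})=2f(x)$ for all $x,y$ and $f(1)=0$. $KAM(G;E)$: functions $f\colon G\to E$ such that $\{f(xy)-f(x)-f(y): x,y\in G\}$ is bounded. $PAM(G;E)$: those $f\in KAM(G;E)$ with $f(x^n)=nf(x)$ for all $x\in G$, $n\in\mathbb{Z}$. $\mathrm{Hom}(G;E)$: homomorphisms from $G$ to the additive group of $E$. *)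

(* Defs.v *)
From HB Require Import structures.
From mathcomp Require Import all_boot all_order all_algebra.
From mathcomp Require Import all_classical all_reals all_analysis.
Set Implicit Arguments. Unset Strict Implicit. Unset Printing Implicit Defensive.
Import Order.TTheory GRing.Theory Num.Theory.
Import numFieldNormedType.Exports.
Local Open Scope ring_scope.

(* An arbitrary (possibly infinite) group is a [groupType] from mathcomp's
   monoid.v (written multiplicatively, notations in %g scope).  A real Banach
   space is a [completeNormedModType R] with [R : realType]. *)

Definition gexpz (G : groupType) (x : G) (n : int) : G :=
  match n with
  | Posz k => (x ^+ k)%g
  | Negz k => ((x ^+ k.+1)^-1)%g
  end.

Section Classes.
Variables (R : realType) (G : groupType) (E : normedModType R).

Definition KJ (f : G -> E) : Prop :=
  exists c : R, forall x y : G,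
    `| f (x * y)%g + f (x * y^-1)%g - f x *+ 2 | <= c.

Definition PJ (f : G -> E) : Prop :=
  KJ f /\ forall (x : G) (n : int), f (gexpz x n) = f x *~ n.

Definition J0 (f : G -> E) : Prop :=
  (forall x y : G, f (x * y)%g + f (x * y^-1)%g = f x *+ 2) /\ f 1%g = 0.

Definition KAM (f : G -> E) : Prop :=
  exists c : R, forall x y : G, `| f (x * y)%g - f x - f y | <= c.

Definition PAM (f : G -> E) : Prop :=
  KAM f /\ forall (x : G) (n : int), f (gexpz x n) = f x *~ n.

Definition HomG (f : G -> E) : Prop :=
  forall x y : G, f (x * y)%g = f x + f y.

End Classes.

(* Main.v *)
Require Import Defs.
From HB Require Import structures.
From mathcomp Require Import all_boot all_order all_algebra.
From mathcomp Require Import all_classical all_reals all_analysis.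
Import Order.TTheory GRing.Theory Num.Theory.
Import numFieldNormedType.Exports.
Local Open Scope ring_scope.

Lemma zid1 (V : zmodType) (A B X Y Yi O : V) :
  A + B - X *+ 2 = (A - X - Y) + (B - X - Yi) - (O - Y - Yi) - (O - O - O).
Proof.
rewrite subrr sub0r opprK mulr2n !opprB.
rewrite [Yi + (Y - O)]addrA addrA subrK.
rewrite -[in RHS]addrA (addrA (B - X - Yi)) subrK (addrC (B - X)) addrA subrK.
by rewrite addrACA opprD.
Qed.

Lemma zid2 (V : zmodType) (A B X Y : V) :
  (A + B - X *+ 2) + (A - B - Y *+ 2) = (A - X - Y) *+ 2.
Proof.
rewrite !mulr2n addrACA (addrACA A B A) subrr addr0.
rewrite (addrACA (A - X)) (addrACA A) !opprD addrA.
congr (_ + _); by rewrite addrAC addrACA.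
Qed.

Lemma finv (R : realType) (G : groupType) (E : normedModType R) (f : G -> E) :
  (forall (x : G) (n : int), f (gexpz x n) = f x *~ n) ->
  forall x : G, f (x^-1)%g = - f x.
Proof.
move=> Hh x; have := Hh x (-1); rewrite /= expg1 => ->.
by rewrite mulrN1z.
Qed.

Theorem theorem2p16 (R : realType) (G : groupType) (E : completeNormedModType R) :
  [/\ (forall f : G -> E, KAM f -> KJ f),
      (forall f : G -> E, PAM f -> PJ f),
      (forall f : G -> E, HomG f -> J0 f)
    & (forall f : G -> E, PJ f -> (forall x y : G, f (x * y)%g = f (y * x)%g) ->
         PAM f)].
Proof.
have P1 : forall f : G -> E, KAM f -> KJ f.
  move=> f [c Hc]; exists (c + c + c + c) => x y.
  rewrite (zid1 _ _ _ _ (f y) (f y^-1)%g (f 1%g)).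
  have H1 := Hc y y^-1%g; rewrite mulgV in H1.
  have H2 := Hc 1%g 1%g; rewrite mul1g in H2.
  apply: (le_trans (ler_normB _ _)); apply: lerD => //.
  apply: (le_trans (ler_normB _ _)); apply: lerD => //.
  by apply: (le_trans (ler_normD _ _)); apply: lerD.
split => //.
- by move=> f [Hk Hh]; split => //; apply: P1.
- move=> f Hf.
  have f1 : f 1%g = 0.
    move: (Hf 1%g 1%g); rewrite mul1g => /(congr1 (fun v => v - f 1%g)).
    by rewrite subrr addrK.
  split => // x y.
  have Hy : f y + f (y^-1)%g = 0 by rewrite -Hf mulgV.
  by rewrite !Hf addrACA Hy addr0 mulr2n.
- move=> f [[c Hc] Hh] Hcom; split => //; exists (c + c) => x y.
  have E1 := Hc x y; have E2 := Hc y x.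
  rewrite -Hcom -(invgK (y * x^-1)%g) invgF finv // in E2.
  have := zid2 _ (f (x * y)%g) (f (x * y^-1)%g) (f x) (f y).
  move=> Heq.
  apply: (le_trans _ (le_trans (ler_normD _ _) (lerD E1 E2))).
  rewrite Heq normrMn mulr2n lerDl //.
Qed.
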